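(* Let $H$ be a triangle-free graph (possibly with loops) on $n\geq 4$ vertices, let $t\ge 0$ and $c$ be integers with $c\geq 16(nt+n^3)$, let $\Psi$ be a suited $(c+t)$-coloring of $\mathcal{E}_c(H)$, and let $x=\sqrt[4]{(nt+n^3)c^3}$. Then there exists a vertex $v\in V(H)$ such that at least $c-x$ primary colors are $v$-robust (with respect to $\Psi$).
   Context: Graphs have no multiple edges but may have loops; triangle-free means there are no three distinct pairwise adjacent vertices. For integer $c\ge1$, maps $\phi_1,\phi_2:V(H)\to[c]$ are co-proper if $\phi_1(u)\ne\phi_2(v)$ whenever $u\sim v$ in $H$. The exponential graph $\mathcal{E}_c(H)$ has vertex set $[c]^{V(H)}$, with $\phi_1\sim\phi_2$ iff they are co-proper. A proper $(c+t)$-coloring $\Psi:V(\mathcal{E}_c(H))\to[c+t]$ gives adjacent maps different colors; colors $1,\dots,c$ are primary and $c+1,\dots,c+t$ secondary. $\Psi$ is suited if $\Psi(\phi)\in\operatorname{im}(\phi)\cup\{c+1,\dots,c+t\}$ for every $\phi$. Writing $\overline{N}(v)=\{v\}\cup N(v)$ for the closed neighborhood, a primary color $b\in[c]$ is $v$-robust if for every $\phi\in\Psi^{-1}(b)$ there is $w\in\overline{N}(v)$ with $\phi(w)=b$. *)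

(* Defs.v *)
From HB Require Import structures.
From mathcomp Require Import all_boot all_order all_algebra.
From mathcomp Require Import reals.
Set Implicit Arguments. Unset Strict Implicit. Unset Printing Implicit Defensive.
Import Order.TTheory GRing.Theory Num.Theory.

Definition symmetric_graph (V : finType) (e : rel V) : Prop :=
  forall u v, e u v = e v u.

Definition triangle_free (V : finType) (e : rel V) : Prop :=
  forall x y z : V, x != y -> y != z -> x != z -> ~~ [&& e x y, e y z & e x z].

(* Colors [c] are represented by 'I_c (color i+1 <-> i). *)
Definition coproper (V : finType) (e : rel V) (c : nat) (phi1 phi2 : {ffun V -> 'I_c}) : Prop :=
  forall u v, e u v -> phi1 u != phi2 v.

(* Colors [c+t] are 'I_(c+t); primary colors are those with value < c. *)
Definition proper_exp_coloring (V : finType) (e : rel V) (c t : nat)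
  (Psi : {ffun V -> 'I_c} -> 'I_(c + t)) : Prop :=
  forall phi1 phi2, coproper e phi1 phi2 -> Psi phi1 != Psi phi2.

Definition suited (V : finType) (c t : nat) (Psi : {ffun V -> 'I_c} -> 'I_(c + t)) : Prop :=
  forall phi, (val (Psi phi) < c)%N -> exists u, val (phi u) = val (Psi phi).

Definition robust (V : finType) (e : rel V) (c t : nat)
  (Psi : {ffun V -> 'I_c} -> 'I_(c + t)) (v : V) (b : 'I_c) : bool :=
  [forall phi : {ffun V -> 'I_c}, (val (Psi phi) == val b) ==>
     [exists w : V, ((w == v) || e v w) && (phi w == b)]].

(* Main.v *)
Require Import Defs.
From mathcomp Require Import reals.
From HB Require Import structures.
From mathcomp Require Import all_boot all_order all_algebra.
From mathcomp Require Import zify.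
From mathcomp Require Import lra.
Import Order.TTheory GRing.Theory Num.Theory.
Set Implicit Arguments. Unset Strict Implicit. Unset Printing Implicit Defensive.

Lemma card_sum (T : finType) (A : {set T}) (P : pred T) :
  #|[set x in A | P x]| = \sum_(x in A) (P x : nat).
Proof.
rewrite -sum1_card [RHS]big_mkcond [LHS]big_mkcond /=; apply: eq_bigr => x _.
by rewrite !inE; case: (x \in A); case: (P x).
Qed.

Lemma card_bigcup_seq (T : finType) (I : Type) (s : seq I) (A : I -> {set T}) :
  #|\bigcup_(i <- s) A i| <= \sum_(i <- s) #|A i|.
Proof.
elim: s => [|i s IH]; first by rewrite !big_nil cards0.
rewrite !big_cons cardsU; apply: leq_trans (leq_subr _ _) _.
by rewrite leq_add2l.
Qed.

Lemma mem_bigcup_seq (T : finType) (I : eqType) (s : seq I) (A : I -> {set T}) i x :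
  i \in s -> x \in A i -> x \in \bigcup_(j <- s) A j.
Proof.
elim: s => [|j s IH] //=; rewrite inE big_cons inE => /orP[/eqP <- -> //|Hi Hx].
by rewrite IH ?orbT.
Qed.

Lemma sum_seq_le (I : Type) (s : seq I) (f : I -> nat) k :
  (forall i, f i <= k) -> \sum_(i <- s) f i <= size s * k.
Proof.
move=> H; elim: s => [|i s IH]; first by rewrite big_nil.
by rewrite big_cons /= mulSn leq_add.
Qed.

Section CSP.
Variables (V : finType) (c : nat) (D : V -> {set 'I_c}) (F : V -> 'I_c -> V -> {set 'I_c}).
Let n := #|V|.
Hypothesis HF : forall v b w, #|F v b w| <= n.

Definition indeg v w a := #|[set b in D v | a \in F v b w]|.

Lemma dcount v w : \sum_(a in D w) indeg v w a <= n * #|D v|.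
Proof.
rewrite /indeg.
under eq_bigr => a _ do rewrite card_sum.
rewrite exchange_big /= mulnC -sum_nat_const.
apply: leq_sum => b _; rewrite -card_sum.
apply: leq_trans (HF v b w); apply: subset_leq_card; apply/subsetP => a.
by rewrite inE => /andP[].
Qed.

Definition bad v w := [set a in D w | #|D v| < 2 * n * indeg v w a].

Lemma card_bad v w : 0 < #|D v| -> #|bad v w| <= 2 * n ^ 2.
Proof.
move=> Dv0.
have H1 : #|bad v w| * #|D v| <= 2 * n * (n * #|D v|).
  rewrite -sum_nat_const.
  apply: leq_trans (_ : \sum_(a in bad v w) (2 * n * indeg v w a) <= _).
    by apply: leq_sum => a; rewrite inE => /andP[_ /ltnW].
  apply: leq_trans (_ : \sum_(a in D w) (2 * n * indeg v w a) <= _).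
    rewrite [X in X <= _]big_mkcond [X in _ <= X]big_mkcond /=.
    apply: leq_sum => a _; rewrite inE.
    by case: (a \in D w) => //=; case: ifP.
  by rewrite -(big_distrr (2 * n)) /= leq_mul2l dcount orbT.
have E : 2 * n * (n * #|D v|) = (2 * n ^ 2) * #|D v| by nia.
by rewrite E leq_pmul2r in H1.
Qed.

Definition good w := [set a in D w | [forall v, 2 * n * indeg v w a <= #|D v|]].

Lemma card_good w : (forall v, 0 < #|D v|) -> #|D w| <= #|good w| + 2 * n ^ 3.
Proof.
move=> HD0.
have sub : D w \subset good w :|: \bigcup_(v : V) bad v w.
  apply/subsetP => a Ha; rewrite !inE Ha /=.
  rewrite -implyNb negb_forall; apply/implyP => /existsP[v Hv].
  apply/bigcupP; exists v => //; rewrite inE Ha /= ltnNge; exact: Hv.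
apply: leq_trans (subset_leq_card sub) _.
rewrite cardsU; apply: leq_trans (leq_subr _ _) _; rewrite leq_add2l.
apply: leq_trans (card_bigcup_seq _ _) _.
apply: leq_trans (_ : \sum_(v : V) (2 * n ^ 2) <= _).
  by apply: leq_sum => v _; apply: card_bad.
rewrite sum_nat_const -/n; nia.
Qed.

Hypothesis HD : forall v, 4 * n ^ 3 + 2 * n ^ 2 < #|D v|.
Variable a0 : 'I_c.

Lemma greedy (P : seq V) : uniq P -> exists s : V -> 'I_c,
  (forall v, v \in P -> s v \in good v) /\
  (forall v w, v \in P -> w \in P -> v != w -> s w \notin F v (s v) w).
Proof.
have HD0 : forall v, 0 < #|D v| by move=> v; apply: leq_trans (HD v); rewrite ltnS.
elim: P => [|u P IH] /=.
  by move=> _; exists (fun _ => a0); split.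
move=> /andP[uP uniqP]; have [s [Hg Hc]] := IH uniqP.
have szP : size P <= n by move/card_uniqP: (uniqP) => <-; exact: max_card.
have n0 : 0 < n by rewrite /n; apply/card_gt0P; exists u.
set X1 := \bigcup_(v <- P) F v (s v) u.
set X2 := \bigcup_(w <- P) [set b in D u | s w \in F u b w].
have H1 : #|X1| <= n ^ 2.
  apply: leq_trans (card_bigcup_seq _ _) _.
  apply: leq_trans (sum_seq_le _ (fun v => HF v (s v) u)) _.
  by rewrite expnS expn1 leq_mul2r szP orbT.
have H2 : 2 * #|X2| <= #|D u|.
  have : 2 * n * #|X2| <= n * #|D u|.
    apply: leq_trans (_ : 2 * n * \sum_(w <- P) indeg u w (s w) <= _).
      by rewrite leq_mul2l card_bigcup_seq orbT.
    rewrite big_distrr /=.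
    apply: leq_trans (_ : \sum_(w <- P) #|D u| <= _).
      rewrite big_seq_cond [X in _ <= X]big_seq_cond.
      apply: leq_sum => w /andP[wP _].
      by have := Hg w wP; rewrite inE => /andP[_ /forallP /(_ u)].
    by apply: leq_trans (sum_seq_le _ (fun _ => leqnn _)) _; rewrite leq_mul2r szP orbT.
  move=> H; nia.
have Hgu := card_good u HD0.
have HDu := HD u.
have : 0 < #|good u :\: (X1 :|: X2)|.
  rewrite cardsD.
  have : #|good u :&: (X1 :|: X2)| <= #|X1| + #|X2|.
    apply: leq_trans (subset_leq_card (subsetIr _ _)) _.
    by rewrite cardsU leq_subr.
  move: H1 H2 Hgu HDu; set N3 := n ^ 3; set N2 := n ^ 2; lia.
move/card_gt0P => [a]; rewrite in_setD in_setU negb_or => /andP[/andP[aX1 aX2] ag].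
have aD : a \in D u by move: ag; rewrite inE => /andP[].
exists (fun x => if x == u then a else s x); split.
  move=> v; rewrite inE => /orP[/eqP -> | vP]; first by rewrite eqxx.
  have -> : (v == u) = false by apply/eqP => E; rewrite -E vP in uP.
  exact: Hg.
move=> v w; rewrite !inE => /orP[/eqP -> | vP] /orP[/eqP -> | wP] vw.
- by rewrite eqxx in vw.
- have -> : (w == u) = false by apply/eqP => E; rewrite -E wP in uP.
  rewrite eqxx; apply/negP => Hin; move/negP: aX2; apply.
  by apply: (mem_bigcup_seq wP); rewrite inE aD.
- have -> : (v == u) = false by apply/eqP => E; rewrite -E vP in uP.
  rewrite eqxx; apply/negP => Hin; move/negP: aX1; apply.
  exact: (mem_bigcup_seq vP).
- have -> : (v == u) = false by apply/eqP => E; rewrite -E vP in uP.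
  have -> : (w == u) = false by apply/eqP => E; rewrite -E wP in uP.
  exact: Hc.
Qed.

Lemma csp : exists s : V -> 'I_c,
  (forall v, s v \in D v) /\ (forall v w, v != w -> s w \notin F v (s v) w).
Proof.
have [s [Hg Hc]] := greedy (enum_uniq V).
exists s; split.
  by move=> v; have := Hg v (mem_enum _ v); rewrite inE => /andP[].
by move=> v w; apply: Hc; rewrite mem_enum.
Qed.
End CSP.
Section Main.
Variables (V : finType) (e : rel V) (t c : nat) (Psi : {ffun V -> 'I_c} -> 'I_(c + t)).
Hypothesis proper : proper_exp_coloring e Psi.
Hypothesis suit : suited Psi.
Variable a0 : 'I_c.
Let phi0 : {ffun V -> 'I_c} := [ffun _ => a0].

Definition wit v (b : 'I_c) : {ffun V -> 'I_c} :=
  odflt phi0 [pick phi : {ffun V -> 'I_c} | (val (Psi phi) == val b) &&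
      [forall w, ((w == v) || e v w) ==> (phi w != b)]].

Lemma witP v b : ~~ robust e Psi v b ->
  val (Psi (wit v b)) = val b /\ (forall w, (w == v) || e v w -> wit v b w != b).
Proof.
rewrite /robust negb_forall => /existsP[phi Hphi].
rewrite /wit; case: pickP => [psi /andP[/eqP H1 /forallP H2] | H] /=.
  by split => // w Hw; have := H2 w; rewrite Hw.
exfalso; move: (H phi); rewrite negb_imply in Hphi; case/andP: Hphi => -> /=.
rewrite negb_exists => /forallP Hn /forallP; apply => w; apply/implyP => Hw.
by have := Hn w; rewrite Hw.
Qed.


Let n := #|V|.
Hypothesis Hn4 : 4 <= n.
Hypothesis HB : forall v, 8 * (n * t + n ^ 3) < #|[set b | ~~ robust e Psi v b]|.

Definition Fw v b w := [set wit v b y | y in [set y | e w y]].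

Lemma stage k : k <= t.+1 -> exists (S : {set {ffun V -> 'I_c}}) (U : {set 'I_c}),
  [/\ #|S| = k, #|U| <= n * k, (forall psi, psi \in S -> forall v, psi v \in U),
      (forall psi, psi \in S -> c <= Psi psi) & {in S &, injective Psi}].
Proof.
elim: k => [|k IH] Hk.
  exists set0, set0; split; rewrite ?cards0 // => psi; rewrite inE //.
have [S [U [cS cU SU Sc Sinj]]] := IH (ltnW Hk).
have Hkt : k <= t by [].
pose D v := [set b | ~~ robust e Psi v b] :\: U.
have HF : forall v b w, #|Fw v b w| <= n.
  by move=> v b w; apply: leq_trans (leq_imset_card _ _) (max_card _).
have HD : forall v, 4 * n ^ 3 + 2 * n ^ 2 < #|D v|.
  move=> v; have := HB v; rewrite /D cardsD.
  have : #|[set b | ~~ robust e Psi v b] :&: U| <= #|U| by apply: subset_leq_card; apply: subsetIr.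
  have : n * k <= n * t by rewrite leq_mul2l Hkt orbT.
  have : n ^ 2 <= n ^ 3 by rewrite [n ^ 3]expnSr leq_pmulr // (leq_trans _ Hn4).
  move: cU; set N3 := n ^ 3; set N2 := n ^ 2; set nk := n * k; set nt := n * t; lia.
have [s [sD sF]] := csp HF HD a0.
pose psi : {ffun V -> 'I_c} := [ffun v => s v].
have psiU : forall v, psi v \notin U.
  by move=> v; rewrite ffunE; have := sD v; rewrite inE => /andP[].
have psic : c <= Psi psi.
  rewrite leqNgt; apply/negP => /suit [u Hu].
  have Bu : ~~ robust e Psi u (s u) by have := sD u; rewrite !inE => /andP[_].
  have [W1 W2] := witP Bu.
  have Hcop : coproper e psi (wit u (s u)).
    move=> x y Exy; rewrite ffunE.
    case: (eqVneq x u) => [xu | xu]; first subst x.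
      by rewrite eq_sym; apply: W2; rewrite Exy orbT.
    have ux : u != x by rewrite eq_sym.
    move: (sF u x ux); apply: contra => /eqP ->.
    by apply/imsetP; exists y; rewrite ?inE.
  move/eqP: (proper Hcop); apply; apply: val_inj.
  by rewrite W1 -Hu ffunE.
have /card_gt0P [v0 _] : 0 < #|V| by rewrite -/n; apply: leq_trans Hn4.
have psiS : psi \notin S.
  by apply/negP => H; move: (psiU v0); rewrite SU.
have cop : forall p, p \in S -> coproper e psi p.
  move=> p pS x y _; apply/eqP => E; move: (psiU x); by rewrite E SU.
exists (psi |: S), (U :|: [set s v | v : V]); split.
- by rewrite cardsU1 psiS cS add1n.
- rewrite cardsU; apply: leq_trans (leq_subr _ _) _.
  have : #|[set s v | v : V]| <= n by apply: leq_trans (leq_imset_card _ _) (max_card _).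
  by rewrite mulnS; move=> h2; rewrite addnC leq_add.
- move=> p; rewrite in_setU1 => /orP[/eqP -> | /SU H] v; rewrite inE.
    by apply/orP; right; apply/imsetP; exists v => //; rewrite ffunE.
  by rewrite H.
- by move=> p; rewrite in_setU1 => /orP[/eqP -> | /Sc].
- move=> p1 p2; rewrite !in_setU1 => /orP[/eqP-> | H1] /orP[/eqP-> | H2] E //.
  + by have := proper (cop _ H2); rewrite E eqxx.
  + by have := proper (cop _ H1); rewrite E eqxx.
  + exact: Sinj.
Qed.

Lemma final_contra : False.
Proof.
have [S [U [cS _ _ Sc Sinj]]] := stage (leqnn _).
have : #|Psi @: S| <= t.
  apply: leq_trans (_ : #|[set i : 'I_(c+t) | c <= i]| <= t).
    apply: subset_leq_card; apply/subsetP => i /imsetP[p pS ->]; rewrite inE; exact: Sc.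
  have := cardsC [set i : 'I_(c+t) | c <= i]; rewrite card_ord.
  have : c <= #|~: [set i : 'I_(c+t) | c <= i]|.
    have Hc : #|[set widen_ord (leq_addr t c) j | j : 'I_c]| = c.
      by rewrite card_imset ?card_ord //; by move=> j1 j2 /(congr1 val) /= /val_inj.
    apply: (leq_trans (eq_leq (esym Hc))).
    apply: subset_leq_card; apply/subsetP => i /imsetP[j _ ->].
    by rewrite !inE /= -ltnNge; exact: ltn_ord.
  lia.
by rewrite card_in_imset // cS ltnn.
Qed.
End Main.

Lemma sqn (R : realType) m : (Num.sqrt ((m ^ 2)%:R : R) = m%:R)%R.
Proof. by rewrite natrX sqrtr_sqr ger0_norm. Qed.

Theorem lemma5 (R : realType) (V : finType) (e : rel V) (t c : nat)
  (Psi : {ffun V -> 'I_c} -> 'I_(c + t)) :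
  symmetric_graph e -> triangle_free e ->
  (4 <= #|V|)%N ->
  (16 * (#|V| * t + #|V| ^ 3) <= c)%N ->
  proper_exp_coloring e Psi -> suited Psi ->
  exists v : V,
    ((c%:R : R) - Num.sqrt (Num.sqrt (((#|V| * t + #|V| ^ 3) * c ^ 3)%N%:R))
      <= (#|[set b : 'I_c | robust e Psi v b]|)%:R)%R.
Proof.
move=> _ _ Hn Hc prop suit.
set K := #|V| * t + #|V| ^ 3.
have K0 : 0 < K.
  have : 0 < #|V| ^ 3 by rewrite expn_gt0 (leq_trans _ Hn).
  rewrite /K; lia.
have c0 : 0 < c by apply: leq_trans Hc; rewrite muln_gt0 K0.
pose a0 := Ordinal c0.
have Hx : (((8 * K)%:R : R) <= Num.sqrt (Num.sqrt ((K * c ^ 3)%N%:R)))%R.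
  rewrite -[((8 * K)%:R : R)%R]sqn -[(((8 * K) ^ 2)%:R : R)%R]sqn -expnM.
  rewrite ler_sqrt ?sqrtr_ge0 // ler_sqrt ?ler0n // ler_nat.
  have E : (8 * K) ^ (2 * 2) = K * (16 * K) ^ 3.
    rewrite /= expnMn [K ^ 4]expnS (expnMn 16 K 3) mulnCA; congr (_ * (_ * _)).
  rewrite E leq_mul2l; apply/orP; right.
  by rewrite leq_exp2r.
case: (boolP [exists v, ((c%:R : R) - Num.sqrt (Num.sqrt ((K * c ^ 3)%N%:R))
      <= (#|[set b : 'I_c | robust e Psi v b]|)%:R)%R]) => [/existsP //|].
rewrite negb_exists => /forallP Hall.
exfalso; apply: (final_contra prop suit a0 Hn) => v.
have := Hall v; rewrite -ltNge => H.
have : (((#|[set b : 'I_c | robust e Psi v b]| + 8 * K)%:R : R) < c%:R)%R.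
  rewrite natrD; lra.
rewrite ltr_nat.
have -> : [set b | ~~ robust e Psi v b] = ~: [set b : 'I_c | robust e Psi v b].
  by apply/setP => b; rewrite !inE.
have := cardsC [set b : 'I_c | robust e Psi v b]; rewrite card_ord.
rewrite -/K; lia.
Qed.
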